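(* Consider the discrete-time closed-loop system $x(t+1)=f(x(t),v(t))$ with $x(t)\in\mathbb{R}^n$, $v(t)\in\mathbb{R}^m$, a constraint set $\mathcal{C}\subset\mathbb{R}^{n+m}$, a set $P\subseteq\mathbb{R}^{n+m}$ (not assumed invariant), $Q=Q^{\mathrm T}\succ0$, and a desired reference sequence $r(t)$. Assume A2, A3, A4 and A5 (see context) hold. Let $v(0)$ satisfy $(x(0),v(0))\in P$, and for $t\ge1$ let $v(t)$ be generated by the modified Command Governor (see context). Suppose there exist scalars $\varepsilon',\delta'>0$ such that, at every time $t$ with $\|x(t)-x_{v(t-1)}\|<\varepsilon'$, the resulting $v(t)$ is feasible, $(x(t),v(t))\in P$, and satisfies $$\|v(t)-r^*(t)\|_Q^2\le\max\{0,\ \|v(t-1)-r^*(t)\|_Q^2-(\delta')^2\},$$ where $r^*(t)=\arg\min_{v\in R_P}\|v-r(t)\|_Q^2$. Then: 1. $(x(t),v(t))\in\mathcal{C}$ for all $t\ge0$. 2. If $r(t)=r_0$ for all $t\ge\hat t$ and $r_0\in R_P$, then there is $T$ with $v(t)=r_0$ for all $t\ge T$. 3. If $r(t)=r_0$ for all $t\ge\hat t$ and $r_0\notin R_P$, then there is $T$ with $v(t)=r^*$ for all $t\ge T$, where $r^*=\arg\min_{v\in R_P}\|v-r_0\|_Q^2$.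
   Context: Notation: $\|w\|_Q^2=w^{\mathrm T}Qw$. For a constant reference $v$ and initial state $x_0$, $x(t;x_0,v)$ denotes the solution of $x(t+1)=f(x(t),v)$ with $x(0)=x_0$. The maximum output admissible set is $O_\infty=\{(x_0,v): (x(t;x_0,v),v)\in\mathcal{C}\ \forall t\in\mathbb{Z}_{\ge0}\}$. For $x\in\mathbb{R}^n$ let $P_x=\{v:(x,v)\in P\}$; for $v\in\mathbb{R}^m$ let $P_v=\{x:(x,v)\in P\}$. Assumptions: A2: For each $v$ there is a unique equilibrium $x_v$ with $f(x_v,v)=x_v$, and $v\mapsto x_v$ is Lipschitz continuous; the set $R_P=\{v:(x_v,v)\in P\}$ and the sets $P_x$ (for every $x$) are closed and convex. A3: There is $\varepsilon>0$ such that for every $v\in R_P$, $P_v$ contains the ball of radius $\varepsilon$ centered at $x_v$. A4: $P\subseteq O_\infty\subseteq\mathcal{C}$. A5: For any reference sequence $v(t)$ with $v(t)-v(t-1)\to0$, the corresponding solution satisfies $x(t)-x_{v(t)}\to0$ as $t\to\infty$. Modified Command Governor: at each time $t\ge1$, some (possibly suboptimal, arbitrary) candidate $v'\in\mathbb{R}^m$ for the problem $\min_v\|r(t)-v\|_Q^2$ s.t. $(x(t),v)\in P$ is produced. The candidate is accepted, $v(t)=v'$, if both $(x(t),v')\in P$ and $\|v'-r(t)\|_Q^2\le\|v(t-1)-r(t)\|_Q^2-\|v'-v(t-1)\|_Q^2$; otherwise it is rejected and $v(t)=v(t-1)$. *)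

(* Defs.v *)
From HB Require Import structures.
From mathcomp Require Import all_boot all_order all_algebra.
From mathcomp Require Import all_classical all_reals all_analysis.
Set Implicit Arguments. Unset Strict Implicit. Unset Printing Implicit Defensive.
Import Order.TTheory GRing.Theory Num.Theory.
Import numFieldNormedType.Exports.
Local Open Scope ring_scope.

Definition enorm {R : realType} {k : nat} (w : 'cV[R]_k) : R :=
  Num.sqrt (\sum_(i < k) w i 0 ^+ 2).

Definition qnorm2 {R : realType} {k : nat} (Q : 'M[R]_k) (w : 'cV[R]_k) : R :=
  (w^T *m Q *m w) 0 0.

Definition sym_posdef {R : realType} {k : nat} (Q : 'M[R]_k) : Prop :=
  Q^T = Q /\ forall w : 'cV[R]_k, w != 0 -> 0 < qnorm2 Q w.

Definition convex_set {R : realType} {k : nat} (S : 'cV[R]_k -> Prop) : Prop :=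
  forall a b : 'cV[R]_k, forall l : R, S a -> S b -> 0 <= l -> l <= 1 ->
    S (l *: a + (1 - l) *: b).

Definition traj {R : realType} {n m : nat} (f : 'cV[R]_n -> 'cV[R]_m -> 'cV[R]_n)
  (x0 : 'cV[R]_n) (v : 'cV[R]_m) (t : nat) : 'cV[R]_n :=
  iter t (fun x => f x v) x0.

Definition Oinf {R : realType} {n m : nat} (f : 'cV[R]_n -> 'cV[R]_m -> 'cV[R]_n)
  (C : 'cV[R]_n -> 'cV[R]_m -> Prop) (x0 : 'cV[R]_n) (v : 'cV[R]_m) : Prop :=
  forall t : nat, C (traj f x0 v t) v.

Definition tends_to_zero {R : realType} {k : nat} (u : nat -> 'cV[R]_k) : Prop :=
  forall e : R, 0 < e -> exists N : nat, forall t : nat, (N <= t)%N -> enorm (u t) < e.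

Definition is_argmin {R : realType} {k : nat} (Q : 'M[R]_k) (S : 'cV[R]_k -> Prop)
  (r w : 'cV[R]_k) : Prop :=
  S w /\ forall u, S u -> qnorm2 Q (w - r) <= qnorm2 Q (u - r).

Definition RP {R : realType} {n m : nat} (P : 'cV[R]_n -> 'cV[R]_m -> Prop)
  (xeq : 'cV[R]_m -> 'cV[R]_n) (v : 'cV[R]_m) : Prop := P (xeq v) v.

Definition A2 {R : realType} {n m : nat} (f : 'cV[R]_n -> 'cV[R]_m -> 'cV[R]_n)
  (P : 'cV[R]_n -> 'cV[R]_m -> Prop) (xeq : 'cV[R]_m -> 'cV[R]_n) : Prop :=
  (forall v, f (xeq v) v = xeq v) /\
  (forall v x, f x v = x -> x = xeq v) /\
  (exists L : R, forall v w, enorm (xeq v - xeq w) <= L * enorm (v - w)) /\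
  closed [set v | RP P xeq v] /\ convex_set (RP P xeq) /\
  (forall x, closed [set v | P x v] /\ convex_set (P x)).

Definition A3 {R : realType} {n m : nat}
  (P : 'cV[R]_n -> 'cV[R]_m -> Prop) (xeq : 'cV[R]_m -> 'cV[R]_n) : Prop :=
  exists eps : R, 0 < eps /\
    forall v, RP P xeq v -> forall x, enorm (x - xeq v) < eps -> P x v.

Definition A4 {R : realType} {n m : nat} (f : 'cV[R]_n -> 'cV[R]_m -> 'cV[R]_n)
  (C P : 'cV[R]_n -> 'cV[R]_m -> Prop) : Prop :=
  (forall x v, P x v -> Oinf f C x v) /\ (forall x v, Oinf f C x v -> C x v).

Definition A5 {R : realType} {n m : nat} (f : 'cV[R]_n -> 'cV[R]_m -> 'cV[R]_n)
  (xeq : 'cV[R]_m -> 'cV[R]_n) : Prop :=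
  forall (vs : nat -> 'cV[R]_m) (xs : nat -> 'cV[R]_n),
    (forall t, xs t.+1 = f (xs t) (vs t)) ->
    tends_to_zero (fun t => vs t.+1 - vs t) ->
    tends_to_zero (fun t => xs t - xeq (vs t)).

Definition cg_accept {R : realType} {n m : nat} (Q : 'M[R]_m)
  (P : 'cV[R]_n -> 'cV[R]_m -> Prop) (xt : 'cV[R]_n) (vprev c rt : 'cV[R]_m) : Prop :=
  P xt c /\ qnorm2 Q (c - rt) <= qnorm2 Q (vprev - rt) - qnorm2 Q (c - vprev).

Definition cg_step {R : realType} {n m : nat} (Q : 'M[R]_m)
  (P : 'cV[R]_n -> 'cV[R]_m -> Prop) (xt : 'cV[R]_n) (vprev c rt vt : 'cV[R]_m) : Prop :=
  (cg_accept Q P xt vprev c rt -> vt = c) /\ (~ cg_accept Q P xt vprev c rt -> vt = vprev).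

(* Main.v *)
Require Import Defs.
From HB Require Import structures.
From mathcomp Require Import all_boot all_order all_algebra.
From mathcomp Require Import all_classical all_reals all_analysis.
From mathcomp Require Import ring lra.
Import Order.TTheory GRing.Theory Num.Theory.
Import numFieldNormedType.Exports.
Local Open Scope ring_scope.
Section Q.
Variable R : realType.
Variable k : nat.
Variable Q : 'M[R]_k.

Lemma qnorm2_sum (w : 'cV[R]_k) :
  qnorm2 Q w = \sum_j (\sum_i w i 0 * Q i j) * w j 0.
Proof.
rewrite /qnorm2 mxE; apply: eq_bigr => j _; rewrite mxE; congr (_ * _).
by apply: eq_bigr => i _; rewrite mxE.
Qed.

Lemma qnorm2_0 : qnorm2 Q 0 = 0.
Proof. by rewrite qnorm2_sum big1 // => j _; rewrite mxE mulr0. Qed.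

Lemma qnorm2_Z a w : qnorm2 Q (a *: w) = a ^+ 2 * qnorm2 Q w.
Proof.
rewrite !qnorm2_sum mulr_sumr; apply: eq_bigr => j _.
rewrite !mulr_suml mulr_sumr; apply: eq_bigr => i _.
rewrite !mxE; ring.
Qed.

Lemma qnorm2_D a b : qnorm2 Q (a + b) =
  qnorm2 Q a + qnorm2 Q b + (a^T *m Q *m b) 0 0 + (b^T *m Q *m a) 0 0.
Proof.
rewrite /qnorm2.
have -> : (a+b)^T = a^T + b^T by apply/matrixP=> i j; rewrite !mxE.
rewrite !mulmxDl !mulmxDr !mxE; ring.
Qed.

Lemma qnorm2_N a : qnorm2 Q (- a) = qnorm2 Q a.
Proof. by rewrite -scaleN1r qnorm2_Z expr2 mulrNN !mul1r. Qed.

Lemma qnorm2_par a b : qnorm2 Q (a + b) + qnorm2 Q (a - b) = 2 * qnorm2 Q a + 2 * qnorm2 Q b.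
Proof.
rewrite !qnorm2_D qnorm2_N /qnorm2.
have -> : (- b)^T = - b^T by apply/matrixP=> i j; rewrite !mxE.
rewrite !mulNmx mulmxN !mxE.
ring.
Qed.
End Q.

Section Q2.
Variable R : realType.
Variable k : nat.
Variable Q : 'M[R]_k.
Hypothesis HQ : sym_posdef Q.

Lemma q_ge0 w : 0 <= qnorm2 Q w.
Proof.
case: (eqVneq w 0) => [->|/HQ.2 /ltW //]; by rewrite qnorm2_0.
Qed.

Lemma q_le0 w : qnorm2 Q w <= 0 -> w = 0.
Proof.
case: (eqVneq w 0) => // /HQ.2 h1 h2.
by have := lt_le_trans h1 h2; rewrite ltxx.
Qed.

Lemma argmin_uniq (S : 'cV[R]_k -> Prop) r w1 w2 :
  Defs.convex_set S -> is_argmin Q S r w1 -> is_argmin Q S r w2 -> w1 = w2.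
Proof.
move=> cS [S1 m1] [S2 m2].
have Smid := cS _ _ (2^-1) S1 S2.
have h2 : (0:R) <= 2^-1 by rewrite invr_ge0.
have h3 : (2^-1 : R) <= 1 by rewrite invf_le1 // ler1n.
have {Smid h2 h3} Smid := Smid h2 h3.
have Emid : 2^-1 *: w1 + (1 - 2^-1) *: w2 - r = 2^-1 *: ((w1 - r) + (w2 - r)).
  apply/matrixP=> i j; rewrite !mxE; field.
  done.
have := m1 _ Smid; rewrite Emid qnorm2_Z.
have := @qnorm2_par R k Q (w1 - r) (w2 - r).
have -> : w1 - r - (w2 - r) = w1 - w2.
  apply/matrixP=> i j; rewrite !mxE; ring.
have := m1 _ S2; have := m2 _ S1.
move=> a b c d.
apply/eqP; rewrite -subr_eq0; apply/eqP/q_le0.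
have E4 : (2^-1 : R) ^+ 2 = 4^-1 by rewrite expr2 -invfM; congr (_^-1); ring.
rewrite E4 in d.
lra.
Qed.
End Q2.

Lemma cont_sum (R : realType) (T : topologicalType) (I : Type) (s : seq I)
  (F : I -> T -> R) : (forall i, continuous (F i)) ->
  continuous (fun u => \sum_(i <- s) F i u).
Proof.
move=> hF; elim: s => [|a s IH].
  have -> : (fun u => \sum_(i <- [::]) F i u) = fun=> 0.
    by apply/funext => u; rewrite big_nil.
  exact: cst_continuous.
have -> : (fun u => \sum_(i <- a :: s) F i u) = F a + (fun u => \sum_(i <- s) F i u).
  by apply/funext => u; rewrite big_cons.
by move=> u; apply: continuousD; [exact: hF | exact: IH].
Qed.

Definition ss {R : realType} {k : nat} (w : 'cV[R]_k) : R := \sum_i w i 0 ^+ 2.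

Lemma ss_ge0 (R : realType) k (w : 'cV[R]_k) : 0 <= ss w.
Proof. by rewrite /ss sumr_ge0 // => i _; rewrite sqr_ge0. Qed.

Lemma coercive (R : realType) k (Q : 'M[R]_k) : sym_posdef Q ->
  exists mu : R, 0 < mu /\ forall w, mu * ss w <= qnorm2 Q w.
Proof.
move=> HQ.
pose g (u : 'rV[R]_k) : R := qnorm2 Q u^T.
pose h (u : 'rV[R]_k) : R := \sum_i u ord0 i ^+ 2.
pose A := [set u | h u = 1]%classic.
have coordc (i : 'I_k) : continuous (fun u : 'rV[R]_k => u ord0 i).
  exact: coord_continuous.
have hc : continuous h.
  rewrite /h; apply: (@cont_sum R _ _ _ (fun i (u : 'rV[R]_k) => u ord0 i ^+ 2)) => i u.
  have -> : (fun u0 : 'rV[R]_k => u0 ord0 i ^+ 2) = (fun u0 => u0 ord0 i) \* (fun u0 => u0 ord0 i).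
    by apply/funext => v; rewrite /= expr2.
  by apply: continuousM; exact: coordc.
have gc : continuous g.
  have -> : g = fun u => \sum_j (\sum_i u ord0 i * Q i j) * u ord0 j.
    apply/funext => u; rewrite /g qnorm2_sum; apply: eq_bigr => j _.
    rewrite mxE; congr (_ * _); apply: eq_bigr => i _; by rewrite mxE.
  apply: (@cont_sum R _ _ _ (fun j (u : 'rV[R]_k) => (\sum_i u ord0 i * Q i j) * u ord0 j)) => j u.
  have -> : (fun u0 : 'rV[R]_k => (\sum_i u0 ord0 i * Q i j) * u0 ord0 j) = (fun u0 => (\sum_i u0 ord0 i * Q i j)) \* (fun u0 => u0 ord0 j) by [].
  apply: continuousM; last exact: coordc.
  apply: (@cont_sum R _ _ _ (fun i (u : 'rV[R]_k) => u ord0 i * Q i j)) => i v.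
  have -> : (fun u0 : 'rV[R]_k => u0 ord0 i * Q i j) = (fun u0 => u0 ord0 i) \* (fun=> Q i j) by [].
  apply: continuousM; first exact: coordc.
  exact: cst_continuous.
have Acl : closed A.
  apply: (preimage_closed (f := h) (D := [set x | x = 1])); last exact: closed_eq.
  by move=> u _; exact: hc.
have Acp : compact A.
  apply: (subclosed_compact Acl (@rV_compact _ _ (fun=> `[(-1:R), 1]%classic) _)).
    by move=> _; exact: segment_compact.
  move=> u /= hu i; rewrite /= in_itv /=.
  have : u ord0 i ^+ 2 <= 1.
    rewrite -hu /h (bigD1 i) //= lerDl sumr_ge0 // => j _; exact: sqr_ge0.
  move=> H; apply/andP; split; nra.
have scal w : ss w != 0 -> A ((Num.sqrt (ss w))^-1 *: w^T) /\
    g ((Num.sqrt (ss w))^-1 *: w^T) = (ss w)^-1 * qnorm2 Q w.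
  move=> sw0; have sp : 0 < ss w by rewrite lt_def sw0 ss_ge0.
  have sq : Num.sqrt (ss w) ^+ 2 = ss w by rewrite sqr_sqrtr // ltW.
  have sq0 : Num.sqrt (ss w) != 0 by rewrite gt_eqF // sqrtr_gt0.
  split.
    rewrite /A /= /h.
    under eq_bigr do rewrite !mxE exprMn.
    rewrite -mulr_sumr exprVn sq mulVf //.
  rewrite /g.
  have -> : ((Num.sqrt (ss w))^-1 *: w^T)^T = (Num.sqrt (ss w))^-1 *: w.
    by apply/matrixP => i j; rewrite !mxE.
  by rewrite qnorm2_Z exprVn sq.
case: (pselect (A !=set0)%classic) => [A0|An0]; last first.
  exists 1; split => // w; rewrite mul1r.
  case: (eqVneq (ss w) 0) => [->|sw0]; first exact: q_ge0.
  by exfalso; apply: An0; exists ((Num.sqrt (ss w))^-1 *: w^T); exact: (scal w sw0).1.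
have [c cA cmin] := compact_EVT_min A0 Acp (@continuous_subspaceT _ _ A g gc).
exists (g c); split.
  apply: HQ.2; apply/eqP => c0.
  move: cA; rewrite inE /A /= /h.
  have -> : c = 0 by rewrite -[c]trmxK c0; apply/matrixP => i j; rewrite !mxE.
  by rewrite big1 => [/eqP|i _]; [rewrite eq_sym oner_eq0 | rewrite mxE expr0n].
move=> w; case: (eqVneq (ss w) 0) => [->|sw0]; first by rewrite mulr0 q_ge0.
have [uA gu] := scal w sw0.
have := cmin _ (mem_set uA); rewrite gu.
have sp : 0 < ss w by rewrite lt_def sw0 ss_ge0.
move=> H; rewrite -ler_pdivlMr //; by rewrite mulrC.
Qed.

Lemma max0_facts (R : realType) (a : R) :
  0 <= Num.max 0 a /\ a <= Num.max 0 a /\ (Num.max 0 a = 0 \/ Num.max 0 a = a).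
Proof.
rewrite /Num.Def.maxr; case: ifP => h.
  by split; [exact: ltW | split => //; right].
by split => //; split; [rewrite leNgt h | left].
Qed.

Lemma enorm_sq (R : realType) k (w : 'cV[R]_k) : enorm w ^+ 2 = ss w.
Proof. by rewrite /enorm sqr_sqrtr // ss_ge0. Qed.

Lemma enorm_ge0 (R : realType) k (w : 'cV[R]_k) : 0 <= enorm w.
Proof. exact: sqrtr_ge0. Qed.

Lemma enorm_lt (R : realType) k (w : 'cV[R]_k) e : 0 < e -> ss w < e ^+ 2 -> enorm w < e.
Proof.
move=> e0 h; rewrite /enorm.
have e2 : 0 < e ^+ 2 by rewrite exprn_gt0.
by rewrite -(gtr0_norm e0) -sqrtr_sqr ltr_sqrt.
Qed.

Lemma enorm_lt_inv (R : realType) k (w : 'cV[R]_k) e : enorm w < e -> ss w < e ^+ 2.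
Proof.
move=> h; rewrite -enorm_sq; have := @enorm_ge0 _ _ w.
move: (enorm w) h => a h1 h2; nra.
Qed.

Lemma ss_add (R : realType) k (a b : 'cV[R]_k) : ss (a + b) <= 2 * ss a + 2 * ss b.
Proof.
rewrite /ss !mulr_sumr -big_split /=; apply: ler_sum => i _.
rewrite !mxE; have := sqr_ge0 (a i 0 - b i 0); nra.
Qed.

Lemma oinf_shift (R : realType) n m (f : 'cV[R]_n -> 'cV[R]_m -> 'cV[R]_n) C x v :
  Oinf f C x v -> Oinf f C (f x v) v.
Proof. by move=> H t; have := H t.+1; rewrite /traj iterSr. Qed.

Lemma conv (R : realType) n m (f : 'cV[R]_n -> 'cV[R]_m -> 'cV[R]_n)
  (P : 'cV[R]_n -> 'cV[R]_m -> Prop)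
  (Q : 'M[R]_m) (xeq : 'cV[R]_m -> 'cV[R]_n)
  (x : nat -> 'cV[R]_n) (v r c rstar : nat -> 'cV[R]_m) (eps' delta' : R)
  (that : nat) (r0 rs : 'cV[R]_m) :
  sym_posdef Q -> A2 f P xeq -> A5 f xeq ->
  (forall t, x t.+1 = f (x t) (v t)) ->
  (forall t, (1 <= t)%N -> cg_step Q P (x t) (v t.-1) (c t) (r t) (v t)) ->
  (forall t, is_argmin Q (RP P xeq) (r t) (rstar t)) ->
  0 < eps' -> 0 < delta' ->
  (forall t, (1 <= t)%N -> enorm (x t - xeq (v t.-1)) < eps' ->
       P (x t) (v t) /\
       qnorm2 Q (v t - rstar t)
         <= Num.max 0 (qnorm2 Q (v t.-1 - rstar t) - delta' ^+ 2)) ->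
  (forall t, (that <= t)%N -> r t = r0) ->
  is_argmin Q (RP P xeq) r0 rs ->
  exists T : nat, forall t, (T <= t)%N -> v t = rs.
Proof.
move=> HQ [_ [_ [[L HL] [_ [Hconv _]]]]] HA5 Hx Hcg Harg e0 d0 Heps Hr Hrs.
have Hrstar t : (that <= t)%N -> rstar t = rs.
  move=> ht; have := Harg t; rewrite Hr // => H.
  exact: (@argmin_uniq _ _ _ HQ _ _ _ _ Hconv H Hrs).
pose W t := qnorm2 Q (v t - r0).
have W0 t : 0 <= W t by exact: q_ge0.
have Wstep t : (that < t)%N -> W t + qnorm2 Q (v t - v t.-1) <= W t.-1.
  move=> ht; have t1 : (1 <= t)%N by case: t ht.
  have [Ha Hn] := Hcg t t1.
  have rt : r t = r0 by apply: Hr; exact: ltnW.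
  case: (pselect (cg_accept Q P (x t) (v t.-1) (c t) (r t))) => acc.
    rewrite /W (Ha acc); move: acc => [_]; rewrite rt; lra.
  by rewrite /W (Hn acc) subrr qnorm2_0 addr0.
have Wmono t d : (that <= t)%N -> W (t + d)%N <= W t.
  move=> ht; elim: d => [|d IH]; first by rewrite addn0.
  have h : (that < (t + d).+1)%N by rewrite ltnS; exact: leq_trans ht (leq_addr d t).
  have := Wstep _ h; rewrite addnS /=.
  have := @q_ge0 _ _ _ HQ (v (t + d).+1 - v (t + d)).
  lra.
have Hinc e : 0 < e -> exists N, forall t, (N <= t)%N -> qnorm2 Q (v t - v t.-1) < e.
  move=> he; apply: contrapT => Hno.
  have Hno' N : exists t, (N <= t)%N /\ e <= qnorm2 Q (v t - v t.-1).
    apply: contrapT => H1; apply: Hno; exists N => t hN; rewrite ltNge; apply/negP => H2.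
    by apply: H1; exists t.
  have claim k : exists t, (that <= t)%N /\ W t <= W that - k%:R * e.
    elim: k => [|k [t [ht Hk]]]; first by exists that; split => //; rewrite mul0r subr0.
    have [s [hs Hs]] := Hno' t.+1.
    have hts : (that < s)%N by exact: leq_ltn_trans ht hs.
    exists s; split; first exact: ltnW.
    have := Wstep s hts.
    have := Wmono t (s.-1 - t)%N ht.
    rewrite subnKC; last by case: s hs {hts Hs}.
    rewrite -natr1; lra.
  have [t [_ Ht]] := claim (Num.Def.archi_bound (W that / e)).
  have := archi_boundP (divr_ge0 (W0 that) (ltW he)).
  move: (Num.Def.archi_bound (W that / e)) Ht => K Ht hK.
  rewrite ltr_pdivrMr // in hK.
  have := W0 t; lra.
have [mu [mu0 Hmu]] := @coercive _ _ _ HQ.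
have Hss e : 0 < e -> exists N, forall t, (N <= t)%N -> ss (v t - v t.-1) < e.
  move=> he; have [N HN] := Hinc (mu * e) (mulr_gt0 mu0 he); exists N => t ht.
  have h1 := Hmu (v t - v t.-1); have h2 := HN t ht.
  rewrite -(ltr_pM2l mu0); exact: le_lt_trans h1 h2.
have Hdv : tends_to_zero (fun t => v t.+1 - v t).
  move=> e he; have [N HN] := Hss (e ^+ 2) (exprn_gt0 2 he); exists N => t ht.
  apply: enorm_lt => //; exact: (HN t.+1 (leq_trans ht (leqnSn t))).
have Hxs := HA5 v x Hx Hdv.
have HLs a b : ss (xeq a - xeq b) <= (L ^+ 2 + 1) * ss (a - b).
  have := HL a b; rewrite -!enorm_sq.
  have := @enorm_ge0 _ _ (xeq a - xeq b); have := @enorm_ge0 _ _ (a - b).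
  move: (enorm (xeq a - xeq b)) (enorm (a - b)) => p q hq hp hpq.
  have : p * p <= (L * q) * (L * q) by nra.
  nra.
have K0 : 0 < L ^+ 2 + 1 by rewrite ltr_pwDr // sqr_ge0.
pose b := eps' ^+ 2 / (4 * (L ^+ 2 + 1)).
have b0 : 0 < b by rewrite /b divr_gt0 // ?exprn_gt0 // mulr_gt0.
have [N1 HN1] := Hss b b0.
have [N2 HN2] := Hxs (eps' / 2) (divr_gt0 e0 (ltr0Sn _ 1)).
pose T0 := maxn (maxn N1 N2) that.+1.
have Hnear t : (T0 <= t)%N -> enorm (x t - xeq (v t.-1)) < eps'.
  rewrite /T0 !geq_max => /andP [/andP [h1 h2] h3].
  apply: enorm_lt => //.
  have -> : x t - xeq (v t.-1) = (x t - xeq (v t)) + (xeq (v t) - xeq (v t.-1)).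
    by rewrite addrA subrK.
  apply: le_lt_trans (ss_add _ _ _ _) _.
  have g1 := @enorm_lt_inv _ _ _ _ (HN2 t h2).
  have g2 := HN1 t h1.
  have g3 := HLs (v t) (v t.-1).
  have g4 : (L ^+ 2 + 1) * ss (v t - v t.-1) < (L ^+ 2 + 1) * b by rewrite ltr_pM2l.
  have Kb : (L ^+ 2 + 1) * b = eps' ^+ 2 / 4.
    rewrite /b; field; rewrite gt_eqF //.
  have E2 : (eps' / 2) ^+ 2 = eps' ^+ 2 / 4 by field.
  rewrite E2 in g1; rewrite Kb in g4.
  have := exprn_gt0 2 e0; lra.
pose V t := qnorm2 Q (v t - rs).
have Vstep t : (T0 <= t)%N -> V t <= Num.max 0 (V t.-1 - delta' ^+ 2).
  move=> ht; have := ht; rewrite /T0 !geq_max => /andP [_ h3].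
  have t1 : (1 <= t)%N by case: t h3 {ht}.
  have := (Heps t t1 (Hnear t ht)).2.
  by rewrite Hrstar //; exact: ltnW.
have claim k : V (T0 + k)%N <= Num.max 0 (V T0 - k%:R * delta' ^+ 2).
  elim: k => [|k IH]; first by rewrite addn0 mul0r subr0; case: (@max0_facts _ (V T0)) => _ [].
  have := Vstep (T0 + k).+1; rewrite addnS /= => /(_ (leq_trans (leq_addr k T0) (leqnSn _))).
  case: (@max0_facts _ (V (T0 + k)%N - delta' ^+ 2)) => a1 [a2 a3].
  case: (@max0_facts _ (V T0 - k%:R * delta' ^+ 2)) => b1 [b2 b3].
  rewrite -natr1 mulrDl mul1r => hv.
  case: (@max0_facts _ (V T0 - (k%:R * delta' ^+ 2 + delta' ^+ 2))) => c1 [c2 c3].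
  have dd := exprn_gt0 2 d0.
  case: a3 => a3; case: b3 => b3; lra.
have dd := exprn_gt0 2 d0.
pose K2 := Num.Def.archi_bound (V T0 / delta' ^+ 2).
have hK2 : V T0 < K2%:R * delta' ^+ 2.
  rewrite -ltr_pdivrMr //; exact: (archi_boundP (divr_ge0 (@q_ge0 _ _ _ HQ (v T0 - rs)) (ltW dd))).
exists (T0 + K2)%N => t ht.
have htT : (T0 <= t)%N by exact: leq_trans (leq_addr K2 T0) ht.
have := claim (t - T0)%N; rewrite subnKC //.
have hk : K2%:R * delta' ^+ 2 <= (t - T0)%N%:R * delta' ^+ 2.
  rewrite ler_wpM2r ?ler_nat ?(ltW dd) //.
  by rewrite leq_subRL.
case: (@max0_facts _ (V T0 - (t - T0)%N%:R * delta' ^+ 2)) => c1 [c2 c3].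
move=> hv.
have Vt0 : V t <= 0.
  case: c3 => c3; rewrite c3 in hv c1; [done | lra].
by apply/subr0_eq/(@q_le0 _ _ _ HQ).
Qed.

Theorem theorem2 (R : realType) (n m : nat)
  (f : 'cV[R]_n -> 'cV[R]_m -> 'cV[R]_n)
  (C P : 'cV[R]_n -> 'cV[R]_m -> Prop)
  (Q : 'M[R]_m) (xeq : 'cV[R]_m -> 'cV[R]_n)
  (x : nat -> 'cV[R]_n) (v r c rstar : nat -> 'cV[R]_m) :
  sym_posdef Q ->
  A2 f P xeq -> A3 P xeq -> A4 f C P -> A5 f xeq ->
  (forall t, x t.+1 = f (x t) (v t)) ->
  P (x 0%N) (v 0%N) ->
  (forall t, (1 <= t)%N -> cg_step Q P (x t) (v t.-1) (c t) (r t) (v t)) ->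
  (forall t, is_argmin Q (RP P xeq) (r t) (rstar t)) ->
  (exists eps' delta' : R, 0 < eps' /\ 0 < delta' /\
     forall t, (1 <= t)%N -> enorm (x t - xeq (v t.-1)) < eps' ->
       P (x t) (v t) /\
       qnorm2 Q (v t - rstar t)
         <= Num.max 0 (qnorm2 Q (v t.-1 - rstar t) - delta' ^+ 2)) ->
  (forall t, C (x t) (v t)) /\
  (forall (that : nat) (r0 : 'cV[R]_m),
     (forall t, (that <= t)%N -> r t = r0) -> RP P xeq r0 ->
     exists T : nat, forall t, (T <= t)%N -> v t = r0) /\
  (forall (that : nat) (r0 rs : 'cV[R]_m),
     (forall t, (that <= t)%N -> r t = r0) -> ~ RP P xeq r0 ->
     is_argmin Q (RP P xeq) r0 rs ->
     exists T : nat, forall t, (T <= t)%N -> v t = rs).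
Proof.
move=> HQ HA2 HA3 HA4 HA5 Hx HP0 Hcg Harg [eps' [delta' [e0 [d0 Heps]]]].
split.
  have Hinv t : Oinf f C (x t) (v t).
    elim: t => [|t IH]; first exact: HA4.1.
    have [Ha Hn] := Hcg t.+1 (ltn0Sn t).
    case: (pselect (cg_accept Q P (x t.+1) (v t.+1.-1) (c t.+1) (r t.+1))) => acc.
      rewrite (Ha acc); exact: HA4.1 _ _ acc.1.
    rewrite (Hn acc) /= Hx; exact: oinf_shift.
  move=> t; exact: HA4.2 _ _ (Hinv t).
split.
  move=> that r0 Hr Hr0.
  apply: (@conv _ _ _ _ _ _ _ _ _ _ _ _ _ _ _ _ _ HQ HA2 HA5 Hx Hcg Harg e0 d0 Heps Hr).
  split => // u _; rewrite subrr qnorm2_0; exact: q_ge0.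
move=> that r0 rs Hr _ Hrs.
exact: (@conv _ _ _ _ _ _ _ _ _ _ _ _ _ _ _ _ _ HQ HA2 HA5 Hx Hcg Harg e0 d0 Heps Hr Hrs).
Qed.
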